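(* Let $\mathcal{C}$ be a PL-cograph on a point set $\mathcal{P}$ that takes at least two distinct values, and let $X\neq Y$ be points of $\mathcal{P}$. Let $O$ be a point such that $e=\mathcal{C}(X,Y)$, $f=\mathcal{C}(O,X)$ and $g=\mathcal{C}(O,Y)$ are pairwise distinct (such a point exists). For each point $P\notin\{X,Y\}$ define its label $\lambda(P)$ to be the ordered pair $(\mathcal{C}(P,X),\mathcal{C}(P,Y))$ if $\mathcal{C}(P,X)\neq\mathcal{C}(P,Y)$, and the single edge $\mathcal{C}(P,O)$ if $\mathcal{C}(P,X)=\mathcal{C}(P,Y)$ (labels of the two kinds being regarded as different). Then distinct points $P\neq Q$ in $\mathcal{P}\setminus\{X,Y\}$ have distinct labels, i.e. each such point is uniquely determined by its label.
   Context: A cograph is a function $\mathcal{C}$ assigning to each unordered pair $\{P,Q\}$ of distinct elements of a set $\mathcal{P}$ (points) a value $\mathcal{C}(P,Q)$ (an edge). A PL-cograph is a cograph satisfying: (1) for distinct points $P,Q,R$, if $\mathcal{C}(P,Q)=\mathcal{C}(Q,R)$ then $\mathcal{C}(P,Q)=\mathcal{C}(P,R)$; (2) for distinct points $P,Q,R,S$, if $\mathcal{C}(P,Q)=\mathcal{C}(R,S)$ then $\mathcal{C}(P,Q)=\mathcal{C}(P,R)=\mathcal{C}(P,S)=\mathcal{C}(Q,R)=\mathcal{C}(Q,S)$. *)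

(* Defs.v *)
From mathcomp Require Import all_boot.
Set Implicit Arguments. Unset Strict Implicit. Unset Printing Implicit Defensive.

(* A cograph on the point type P with edge values in E is modelled as a
   function C : P -> P -> E which is symmetric on distinct points; only its
   values on pairs of distinct points are meaningful (an unordered pair
   {p,q} with p <> q gets the value C p q = C q p). *)
Definition cograph {P : Type} {E : Type} (C : P -> P -> E) : Prop :=
  forall p q : P, p <> q -> C p q = C q p.

Definition PL_axiom1 {P E : Type} (C : P -> P -> E) : Prop :=
  forall p q r : P, p <> q -> p <> r -> q <> r ->
    C p q = C q r -> C p q = C p r.

Definition PL_axiom2 {P E : Type} (C : P -> P -> E) : Prop :=
  forall p q r s : P,
    p <> q -> p <> r -> p <> s -> q <> r -> q <> s -> r <> s ->
    C p q = C r s ->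
    [/\ C p q = C p r, C p q = C p s, C p q = C q r & C p q = C q s].

Definition PL_cograph {P E : Type} (C : P -> P -> E) : Prop :=
  [/\ cograph C, PL_axiom1 C & PL_axiom2 C].

Definition two_values {P E : Type} (C : P -> P -> E) : Prop :=
  exists a b c d : P, a <> b /\ c <> d /\ C a b <> C c d.

Definition label {P : Type} {E : eqType} (C : P -> P -> E) (X Y O p : P)
  : (E * E) + E :=
  if C p X != C p Y then inl (C p X, C p Y) else inr (C p O).

(* Main.v *)
Require Import Defs.
From mathcomp Require Import all_boot.

Theorem theorem5p1 (P : Type) (E : eqType) (C : P -> P -> E)
  (HC : PL_cograph C) (H2 : two_values C)
  (X Y O : P) (HXY : X <> Y) (HOX : O <> X) (HOY : O <> Y)
  (Hef : C X Y <> C O X) (Heg : C X Y <> C O Y) (Hfg : C O X <> C O Y) :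
  forall p q : P, p <> X -> p <> Y -> q <> X -> q <> Y -> p <> q ->
    label C X Y O p <> label C X Y O q.
Proof.
case: HC => Hs A1 A2.
move=> p q pX pY qX qY pq.
have sym : forall a b : P, a <> b -> b <> a by move=> a b h e; apply: h; rewrite e.
rewrite /label.
case: eqP => Hp; case: eqP => Hq //=; try by [].
- move=> [e1].
  have pO : p <> O by move=> e; subst; apply: Hfg; rewrite Hp.
  have qO : q <> O by move=> e; subst; apply: Hfg; rewrite Hq.
  have a1 : C X p = C X Y.
    apply: A1 => //; first exact: sym. by rewrite (Hs X p (sym _ _ pX)) Hp.
  have a2 : C X q = C X Y.
    apply: A1 => //; first exact: sym. by rewrite (Hs X q (sym _ _ qX)) Hq.
  have b1 : C p X = C q Y.
    by rewrite -Hq (Hs p X pX) (Hs q X qX) a1 a2.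
  have [c1 _ _ _] := A2 p X q Y pX pq pY (sym _ _ qX) HXY qY b1.
  have c2 : C p O = C p q.
    apply: A1 => //; [exact: sym|]. by rewrite e1 Hs //; exact: sym.
  have d : C X Y = C p O.
    by rewrite c2 -c1 (Hs p X pX) a1.
  have [_ f1 _ _] := A2 X Y p O HXY (sym _ _ pX) (sym _ _ HOX) (sym _ _ pY) (sym _ _ HOY) pO d.
  by apply: Hef; rewrite f1 (Hs X O (sym _ _ HOX)).
- move=> [e1 e2].
  have h1 : C p X = C p q.
    apply: A1 => //; first exact: sym. by rewrite e1 (Hs X q (sym _ _ qX)).
  have h2 : C p Y = C p q.
    apply: A1 => //; first exact: sym. by rewrite e2 (Hs Y q (sym _ _ qY)).
  by apply: Hp; rewrite h1 h2.
Qed.
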